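(* Let $\Gamma$ be a set of clauses with designated blocking variables. Any clause $C\lor\ell$ that is cost-BC w.r.t. $\Gamma$ and $\ell$ is also cost-LPR w.r.t. $\Gamma$.
   Context: Substitutions map variables to $0$, $1$ or literals ($\sigma(\lnot x)=\lnot\sigma(x)$); $(\sigma\circ\tau)(x)=\sigma(\tau(x))$; a partial assignment has $\sigma(x)\in\{0,1,x\}$, domain $\sigma^{-1}(\{0,1\})$; total means all variables assigned. $C{\upharpoonright}_\sigma$: apply $\sigma$ to the literals and simplify; $\Gamma{\upharpoonright}_\sigma$ is the multiset of $C{\upharpoonright}_\sigma\ne1$, $C\in\Gamma$. $\lnot C$ is the partial assignment falsifying all literals of $C$. $\Gamma\vdash_1 C$ means unit propagation on $\Gamma{\upharpoonright}_{\lnot C}$ derives the empty clause; $\Gamma\vdash_1\Delta$ means this for all $D\in\Delta$. $\mathrm{cost}(\alpha)=\sum_i\alpha(b_i)$ over blocking variables $b_i$. $C\lor\ell$ is cost-BC w.r.t. $\Gamma$ and $\ell$ if for every $D\lor\lnot\ell\in\Gamma$, $C\lor D$ is a tautology, and $\ell$ is not a blocking variable with positive polarity. A clause $E$ is cost-LPR w.r.t. $\Gamma$ if there is a partial assignment $\sigma$ with the same domain as $\lnot E$, differing from $\lnot E$ on exactly one variable, such that (1) $\Gamma{\upharpoonright}_{\lnot E}\vdash_1(\Gamma\cup\{E\}){\upharpoonright}_\sigma$ and (2) $\mathrm{cost}(\tau\circ\sigma)\le\mathrm{cost}(\tau)$ for all total $\tau\supseteq\lnot E$. *)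

(* Defs.v *)
From mathcomp Require Import all_boot.
Set Implicit Arguments. Unset Strict Implicit. Unset Printing Implicit Defensive.

(* Variables are natural numbers; a literal is a pair (x, p):
   p = true  : the positive literal x,
   p = false : the negative literal ~x. *)
Definition var := nat.
Definition lit := (var * bool)%type.
Definition lvar (l : lit) : var := l.1.
Definition lneg (l : lit) : lit := (l.1, ~~ l.2).

Definition clause := seq lit.
Definition cnf := seq clause.

Definition tautology (C : clause) : bool := has (fun l => lneg l \in C) C.

(* A partial assignment maps a variable to Some b (assigned to b) or to
   None (sigma(x) = x, unassigned).  Its domain is the set of assigned
   variables. *)
Definition pasg := var -> option bool.

Definition lit_val (a : pasg) (l : lit) : option bool :=
  match a l.1 with Some v => Some (v == l.2) | None => None end.

(* C|_a : None stands for the satisfied clause 1; otherwise the clause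
   with the falsified literals removed. *)
Definition restrict_clause (a : pasg) (C : clause) : option clause :=
  if has (fun l => lit_val a l == Some true) C then None
  else Some (filter (fun l => lit_val a l != Some false) C).

Definition restrict (a : pasg) (G : cnf) : cnf := pmap (restrict_clause a) G.

(* ~C : the partial assignment falsifying all literals of the
   (non-tautological) clause C. *)
Definition neg_clause (C : clause) : pasg :=
  fun x => if (x, true) \in C then Some false
           else if (x, false) \in C then Some true else None.

Definition lit_asg (l : lit) : pasg :=
  fun x => if x == l.1 then Some l.2 else None.

Inductive up_refutes : cnf -> Prop :=
| up_conflict F : [::] \in F -> up_refutes F
| up_step F C l : C \in F -> undup C = [:: l] ->
    up_refutes (restrict (lit_asg l) F) -> up_refutes F.

(* Gamma |-_1 D : unit propagation on Gamma|_{~D} derives the empty clause.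
   (A tautological D, for which ~D is undefined, counts as trivially
   implied, as in the usual RUP check.) *)
Definition up_implies (G : cnf) (D : clause) : Prop :=
  tautology D \/ up_refutes (restrict (neg_clause D) G).

Definition up_implies_all (G : cnf) (Ds : cnf) : Prop :=
  forall D, D \in Ds -> up_implies G D.

Definition tasg := var -> bool.
Definition cost (B : seq var) (t : tasg) : nat := \sum_(b <- undup B) (t b : nat).

Definition comp_tp (t : tasg) (s : pasg) : tasg :=
  fun x => match s x with Some b => b | None => t x end.

Definition extends (t : tasg) (a : pasg) : Prop :=
  forall x b, a x = Some b -> t x = b.

Definition cost_BC (B : seq var) (G : cnf) (C : clause) (l : lit) : Prop :=
  (forall G', G' \in G -> lneg l \in G' ->
     tautology (C ++ filter (fun m => m != lneg l) G'))
  /\ ~~ (l.2 && (l.1 \in B)).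

Definition cost_LPR (B : seq var) (G : cnf) (E : clause) : Prop :=
  exists s : pasg,
    (forall x, (s x == None) = (neg_clause E x == None)) /\
    (exists x, s x != neg_clause E x /\
       forall y, y != x -> s y = neg_clause E y) /\
    up_implies_all (restrict (neg_clause E) G) (restrict s (E :: G)) /\
    (forall t : tasg, extends t (neg_clause E) ->
       cost B (comp_tp t s) <= cost B t).

(* Main.v *)
Require Import Defs.
From mathcomp Require Import all_boot.
Set Implicit Arguments. Unset Strict Implicit.

Lemma lnegK (m : lit) : lneg (lneg m) = m.
Proof. by case: m => x b; rewrite /lneg /= negbK. Qed.

Lemma lit_val_lneg (a : pasg) (m : lit) :
  lit_val a (lneg m) = match lit_val a m with Some v => Some (~~ v) | None => None end.
Proof.
case: m => x b; rewrite /lit_val /lneg /=; case: (a x) => // v.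
by case: v; case: b.
Qed.

Lemma nt_mem (E : clause) m : ~~ tautology E -> m \in E -> lneg m \notin E.
Proof. by move=> /hasPn H /H. Qed.

Lemma lit_val_negF (E : clause) m : ~~ tautology E -> m \in E ->
  lit_val (neg_clause E) m = Some false.
Proof.
move=> nt mE; have := nt_mem nt mE.
case: m mE => x [] mE; rewrite /lneg /lit_val /neg_clause /= => H.
  by rewrite mE.
by rewrite (negbTE H) mE.
Qed.

Lemma lit_val_negT (E : clause) m : ~~ tautology E -> lneg m \in E ->
  lit_val (neg_clause E) m = Some true.
Proof.
move=> nt mE; have := lit_val_negF nt mE; rewrite lit_val_lneg.
by case: (lit_val _ m) => // -[].
Qed.

Lemma restrict_self (D : clause) : ~~ tautology D ->
  restrict_clause (neg_clause D) D = Some [::].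
Proof.
move=> nt; rewrite /restrict_clause.
have -> : has (fun l0 => lit_val (neg_clause D) l0 == Some true) D = false.
  apply/negbTE/hasPn => m mD; by rewrite lit_val_negF.
congr Some; apply/nilP; rewrite /nilp size_filter.
rewrite eqn0Ngt -has_count; apply/hasPn => m mD.
by rewrite lit_val_negF // eqxx.
Qed.

Theorem mainTheorem10 (B : seq var) (G : cnf) (C : clause) (l : lit) :
  ~~ tautology (l :: C) ->
  cost_BC B G C l -> cost_LPR B G (l :: C).
Proof.
rewrite /cost_LPR; set E := l :: C => nt [BC1 BC2].
set nE := neg_clause E.
have lE : l \in E by rewrite inE eqxx.
have CE : forall m, m \in C -> m \in E by move=> m mC; rewrite inE mC orbT.
have nEl : nE l.1 = Some (~~ l.2).
  have := lit_val_negF nt lE; rewrite /lit_val /nE.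
  case: (neg_clause E l.1) => // v [].
  by case: v; case: (l.2).
pose s : pasg := fun y => if y == l.1 then Some l.2 else nE y.
have sl : lit_val s l = Some true by rewrite /lit_val /s eqxx eqxx.
have sm : forall m, m != l -> m != lneg l -> lit_val s m = lit_val nE m.
  move=> [x b] H1 H2; rewrite /lit_val /s /=; case: eqP => // ex.
  exfalso; move: H1 H2; rewrite ex /lneg {ex}; have := surjective_pairing l.
  move: (l.1) (l.2) => y c -> /=; by case: b; case: c; rewrite /= ?eqxx.
exists s; split.
  by move=> x; rewrite /s; case: (x =P l.1) => // ->; rewrite nEl.
split.
  exists l.1; rewrite /s eqxx nEl; split; first by case: (l.2).
  by move=> y /negbTE ->.
split.
  move=> D; rewrite mem_pmap => /mapP [G' G'in].
  rewrite /restrict_clause; case: ifP => // nhas [] ->.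
  set D' := filter _ G'.
  move/negbT: nhas => /hasPn nhas.
  case tD : (tautology D'); first by left.
  right; apply: up_conflict.
  move: G'in; rewrite inE => /orP [/eqP eG | G'in].
    by move: (nhas l); rewrite eG lE sl => /(_ isT).
  have Gd : forall k, k \in G' -> k != lneg l -> lneg k \in E -> False.
    move=> k kG kn kE; have := nhas k kG.
    case: (eqVneq k l) => [-> | kl]; first by rewrite sl.
    by rewrite sm // lit_val_negT.
  case: (boolP (lneg l \in G')) => nlG.
    have := BC1 G' G'in nlG => /hasP [m]; rewrite !mem_cat !mem_filter.
    case/orP => [mC | /andP [mn mG]]; case/orP => [mC' | /andP [mn' mG']].
    - by have := nt_mem nt (CE _ mC); rewrite CE.
    - by exfalso; apply: (Gd _ mG' mn'); rewrite lnegK CE.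
    - by exfalso; apply: (Gd _ mG mn); rewrite CE.
    - exfalso; move/negbT: tD => /hasPn /(_ m); rewrite !mem_filter mG mG' andbT.
      have := nhas m mG; have := nhas _ mG'; rewrite lit_val_lneg.
      by case: (lit_val s m) => [[]|] //= _ _ /(_ isT).
  have eqv : {in G', lit_val s =1 lit_val nE}.
    move=> m mG; apply: sm.
      by apply/eqP => eml; move: (nhas m mG); rewrite eml sl.
    by apply/eqP => eml; move: nlG; rewrite -eml mG.
  rewrite mem_pmap; apply/mapP; exists D'; last by rewrite restrict_self // tD.
    rewrite mem_pmap; apply/mapP; exists G' => //.
    rewrite /restrict_clause.
    have -> : has (fun l0 => lit_val nE l0 == Some true) G' = false.
      apply/negbTE/hasPn => m mG; rewrite -eqv //; exact: nhas.
    congr Some; apply: eq_in_filter => m mG; by rewrite eqv.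
move=> t ext; rewrite /cost !big_seq; apply: leq_sum => b.
rewrite mem_undup => bB; rewrite /comp_tp /s.
case: eqP => [eb | nb].
  rewrite eb (ext _ _ nEl); move: BC2; rewrite -eb bB andbT.
  by case: (l.2).
by case e: (nE b) => [v|] //; rewrite (ext _ _ e).
Qed.
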